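(* Let $\mathcal{Q}$ be a nonempty convex delta-matroid on a finite set $E$. Let $r=\max\{|S|:S\in\mathcal{Q}\}$, $s=\min\{|S|:S\in\mathcal{Q}\}$, $\ell=r-s$, let $\{1,\dots,\ell\}$ be $\ell$ new elements disjoint from $E$, $E^\flat=E\cup\{1,\dots,\ell\}$, and $\mathcal{Q}^\flat=\{S\subseteq E^\flat: |S|=r \text{ and } S\cap E\in\mathcal{Q}\}$. Then $\mathcal{Q}^\flat$ is the set of bases of a matroid on $E^\flat$.
   Context: $\mathcal{Q}\subseteq 2^E$ is convex if $S\subseteq T\subseteq S'$ with $S,S'\in\mathcal{Q}$ implies $T\in\mathcal{Q}$. $\mathcal{Q}$ is a delta-matroid if for all $A,B\in\mathcal{Q}$ and $e\in A\triangle B$ there is $f\in A\triangle B$ (possibly $f=e$) with $A\triangle\{e,f\}\in\mathcal{Q}$, where $\triangle$ is symmetric difference. *)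

(* Defs.v *)
From mathcomp Require Import all_boot.
Set Implicit Arguments. Unset Strict Implicit. Unset Printing Implicit Defensive.

Definition convex_family (T : finType) (Q : {set {set T}}) : Prop :=
  forall S U S' : {set T}, S \in Q -> S' \in Q ->
    S \subset U -> U \subset S' -> U \in Q.

Definition symdiff (T : finType) (A B : {set T}) : {set T} :=
  (A :\: B) :|: (B :\: A).

(* Delta-matroid: symmetric exchange axiom (f may equal e, in which case
   A symdiff {e,f} = A symdiff {e}). *)
Definition delta_matroid (T : finType) (Q : {set {set T}}) : Prop :=
  forall A B : {set T}, A \in Q -> B \in Q ->
    forall e, e \in symdiff A B ->
      exists2 f, f \in symdiff A B & symdiff A [set e; f] \in Q.

Definition matroid_bases (T : finType) (B : {set {set T}}) : Prop :=
  B != set0 /\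
  forall B1 B2 : {set T}, B1 \in B -> B2 \in B ->
    forall x, x \in B1 :\: B2 ->
      exists2 y, y \in B2 :\: B1 & (y |: (B1 :\ x)) \in B.

(* r = max size of a member of Q, s = min size of a member of Q
   (for nonempty Q; the initial value #|T| of the min is an upper bound
   for every size, so it does not affect the result). *)
Definition rmax (T : finType) (Q : {set {set T}}) : nat :=
  \max_(S in Q) #|S|.
Definition smin (T : finType) (Q : {set {set T}}) : nat :=
  \big[minn/#|T|]_(S in Q) #|S|.

(* The flattening on E^flat = E + {1..l} (as the disjoint sum T + 'I_l),
   where l = r - s; S \cap E is the preimage of S under inl. *)
Definition flat_family (T : finType) (Q : {set {set T}}) :
  {set {set (T + 'I_(rmax Q - smin Q))}} :=
  [set S : {set (T + 'I_(rmax Q - smin Q))} |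
     (#|S| == rmax Q) && ((@inl T _ @^-1: S) \in Q)].

(* Main.v *)
Require Import Defs.
From mathcomp Require Import all_boot zify.
Set Implicit Arguments. Unset Strict Implicit. Unset Printing Implicit Defensive.

Section Sum.
Variables (A B : finType).
Lemma inl_notin_inr (a : A) (Y : {set B}) : (inl a \in inr @: Y) = false.
Proof. by apply/negbTE/negP => /imsetP [b _]. Qed.
Lemma inr_notin_inl (b : B) (X : {set A}) : (inr b \in inl @: X) = false.
Proof. by apply/negbTE/negP => /imsetP [a _]. Qed.

Lemma card_sum_split (S : {set A + B}) :
  #|S| = #|inl @^-1: S| + #|inr @^-1: S|.
Proof.
have mL := mem_imset _ _ (@inl_inj A B).
have mR := mem_imset _ _ (@inr_inj A B).
have E : S = inl @: (inl @^-1: S) :|: inr @: (inr @^-1: S).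
  by apply/setP => -[a|b]; rewrite !inE ?mL ?mR ?inl_notin_inr ?inr_notin_inl ?inE ?orbF.
rewrite {1}E cardsU (_ : _ :&: _ = set0) ?cards0 ?subn0 ?card_imset //; [exact: inr_inj|exact: inl_inj|].
by apply/setP => -[a|b]; rewrite !inE ?mL ?mR ?inl_notin_inr ?inr_notin_inl ?andbF.
Qed.
End Sum.

Lemma exists_card (n k : nat) : k <= n -> exists K : {set 'I_n}, #|K| = k.
Proof.
elim: k => [|k IH] hk; first by exists set0; rewrite cards0.
have [K HK] := IH (ltnW hk).
have : 0 < #|~: K| by have := cardsC K; rewrite card_ord HK; lia.
rewrite card_gt0 => /set0Pn [x]; rewrite inE => hx.
by exists (x |: K); rewrite cardsU1 hx HK.
Qed.

Section Pre.
Variables (A B : finType).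
Lemma eq_inl (a b : A) : (@inl A B a == inl b) = (a == b). Proof. by []. Qed.
Lemma eq_inr (a b : B) : (@inr A B a == inr b) = (a == b). Proof. by []. Qed.
Lemma eq_inlr (a : A) (b : B) : (inl a == inr b) = false. Proof. by []. Qed.
Lemma eq_inrl (a : A) (b : B) : (inr b == inl a) = false. Proof. by []. Qed.
Definition eqsum := (eq_inl, eq_inr, eq_inlr, eq_inrl).
Lemma pL_U1 (b : A) (S : {set A + B}) : inl @^-1: (inl b |: S) = b |: inl @^-1: S.
Proof. by apply/setP => t; rewrite !inE eqsum. Qed.
Lemma pL_U1r (j : B) (S : {set A + B}) : inl @^-1: (inr j |: S) = inl @^-1: S.
Proof. by apply/setP => t; rewrite !inE eqsum. Qed.
Lemma pL_D1 (a : A) (S : {set A + B}) : inl @^-1: (S :\ inl a) = inl @^-1: S :\ a.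
Proof. by apply/setP => t; rewrite !inE eqsum. Qed.
Lemma pL_D1r (i : B) (S : {set A + B}) : inl @^-1: (S :\ inr i) = inl @^-1: S.
Proof. by apply/setP => t; rewrite !inE eqsum. Qed.
Lemma pL_Uim (X : {set A}) (Y : {set B}) : inl @^-1: (inl @: X :|: inr @: Y) = X.
Proof. by apply/setP => t; rewrite !inE (mem_imset _ _ (@inl_inj A B)) inl_notin_inr orbF. Qed.
Lemma pR_Uim (X : {set A}) (Y : {set B}) : inr @^-1: (inl @: X :|: inr @: Y) = Y.
Proof. by apply/setP => t; rewrite !inE (mem_imset _ _ (@inr_inj A B)) inr_notin_inl. Qed.
End Pre.

Ltac simp_facts := repeat match goal with
 | H : is_true (?x \notin ?A) |- context[?x \in ?A] => rewrite (negbTE H)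
 | H : is_true (?x \in ?A) |- context[?x \in ?A] => rewrite H
 | H : is_true (?x != ?y) |- context[?x == ?y] => rewrite (negbTE H)
 | H : is_true (?x != ?y) |- context[?y == ?x] => rewrite (eq_sym y x) (negbTE H)
 end.

Ltac split_t t := repeat (match goal with |- context[t == ?x] => case: (eqVneq t x) => [->|?] end; simp_facts; rewrite ?eqxx /=).

Ltac sd A1 A2 := apply/setP; let t := fresh "t" in intro t; rewrite /symdiff !inE; split_t t; simp_facts; rewrite ?eqxx /=;
  try by case: (t \in A1); case: (t \in A2).

Lemma up (T : finType) (Q : {set {set T}}) : convex_family Q -> delta_matroid Q ->
  forall A1 A2, A1 \in Q -> A2 \in Q -> #|A1| < #|A2| ->
  exists2 y, y \in A2 :\: A1 & y |: A1 \in Q.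
Proof.
move=> cQ dQ A1 A2 h1 h2 hlt.
suff H : forall k A1, #|symdiff A1 A2| <= k -> A1 \in Q -> #|A1| < #|A2| ->
  exists2 y, y \in A2 :\: A1 & y |: A1 \in Q by exact: (H _ A1 (leqnn _)).
clear A1 h1 hlt.
elim=> [|k IH] A1 hk h1 hlt;
 (have : A2 :\: A1 != set0 by
   rewrite setD_eq0; apply: (contraTN _ hlt) => /subset_leq_card; rewrite -leqNgt);
 case/set0Pn => e /setDP [eA2 eA1];
 (have he : e \in symdiff A1 A2 by rewrite /symdiff !inE eA2 eA1 orbT).
  have : 0 < #|symdiff A1 A2| by apply/card_gt0P; exists e.
  by rewrite ltnNge hk.
have [f hf hQ] := dQ A1 A2 h1 h2 e he.
move: hf; rewrite /symdiff inE => /orP [] /setDP [fA fB]; last first.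
  have E : symdiff A1 [set e; f] = e |: (f |: A1) by sd A1 A2.
  exists e; first by rewrite inE eA2 eA1.
  apply: (cQ A1 _ (e |: (f |: A1))) => //; first by rewrite -E.
    exact: subsetUr.
  by apply: setUS; exact: subsetUr.
have fe : f != e by apply: contraNneq eA1 => <-.
set A1' := e |: (A1 :\ f).
have E : symdiff A1 [set e; f] = A1' by sd A1 A2.
have cA1' : #|A1'| = #|A1|.
  have := cardsD1 f A1; rewrite fA /A1' cardsU1 !inE; simp_facts; rewrite andbF /=; lia.
have ps : symdiff A1' A2 \proper symdiff A1 A2.
  apply/properP; split.
    apply/subsetP => t; rewrite /A1' /symdiff !inE; split_t t; simp_facts; rewrite ?eqxx /=;
      try by case: (t \in A1); case: (t \in A2).
  exists e => //; rewrite /A1' /symdiff !inE; simp_facts; by rewrite ?eqxx.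
have [y hy hyQ] : exists2 y, y \in A2 :\: A1' & y |: A1' \in Q.
  apply: IH; last by rewrite cA1'.
    by have := proper_card ps; lia.
  by rewrite -E.
move/setDP: hy => [yA2 yA1'].
have yf : y != f by apply: contraNneq fB => <-.
have ye : y != e by apply: contraNneq yA1' => ->; rewrite /A1' !inE eqxx.
have yA1 : y \notin A1 by apply: contraNN yA1' => yA; rewrite /A1' !inE yf yA orbT.
have hfs : f \in symdiff (y |: A1') A1.
  rewrite /A1' /symdiff !inE; simp_facts; by rewrite ?eqxx.
have [f' hf' hQ'] := dQ _ _ hyQ h1 f hfs.
have : f' = f \/ f' = e \/ f' = y.
  case: (eqVneq f' f) => [->|?]; first by left.
  case: (eqVneq f' e) => [->|?]; first by right; left.
  case: (eqVneq f' y) => [->|?]; first by right; right.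
  move: hf'; rewrite /A1' /symdiff !inE; simp_facts; rewrite /=.
  by case: (f' \in A1).
case=> [Ef|[Ef|Ef]]; subst f'.
- have E2 : symdiff (y |: A1') [set f; f] = y |: (e |: A1) by rewrite /A1'; sd A1 A2.
  exists e; first by rewrite inE eA2 eA1.
  apply: (cQ A1 _ (y |: (e |: A1))) => //; first by rewrite -E2.
  + exact: subsetUr.
  + exact: subsetUr.
- have E2 : symdiff (y |: A1') [set f; e] = y |: A1 by rewrite /A1'; sd A1 A2.
  exists y; first by rewrite inE yA2 yA1.
  by rewrite -E2.
- have E2 : symdiff (y |: A1') [set f; y] = e |: A1 by rewrite /A1'; sd A1 A2.
  exists e; first by rewrite inE eA2 eA1.
  by rewrite -E2.
Qed.

Lemma bigmin_seq_le (I : eqType) (F : I -> nat) (x0 : nat) (s : seq I) j :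
  j \in s -> \big[minn/x0]_(i <- s) F i <= F j.
Proof.
elim: s => // h s IH; rewrite inE big_cons => /orP [/eqP ->|hj].
  exact: geq_minl.
by rewrite geq_min IH ?orbT.
Qed.

Lemma down_step (T : finType) (Q : {set {set T}}) : convex_family Q -> delta_matroid Q ->
  forall A1 A2 a, A1 \in Q -> A2 \in Q -> a \in A1 -> a \notin A2 ->
  (A1 :\ a \in Q) \/ exists2 b, b \in A2 :\: A1 & b |: (A1 :\ a) \in Q.
Proof.
move=> cQ dQ A1 A2 a q1 q2 aA1 aA2.
  have he : a \in symdiff A1 A2 by rewrite /symdiff !inE aA1 aA2.
  have [f hf hQ] := dQ A1 A2 q1 q2 a he.
  move: hf; rewrite /symdiff inE => /orP [] /setDP [fA fB].
    case: (eqVneq f a) => [Efa|fa].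
      subst f; left.
      have E : symdiff A1 [set a; a] = A1 :\ a by sd A1 A2.
      by rewrite -E.
    left.
    have E : symdiff A1 [set a; f] = A1 :\ a :\ f by sd A1 A2.
    apply: (cQ (A1 :\ a :\ f) _ A1) => //; first by rewrite -E.
      exact: subsetDl.
    exact: subsetDl.
  right; exists f; first by rewrite inE fA fB.
  have fa : f != a by apply: contraNneq fB => ->.
  have E : symdiff A1 [set a; f] = f |: (A1 :\ a) by sd A1 A2.
  by rewrite -E.
Qed.

Theorem theorem4p12 (T : finType) (Q : {set {set T}}) :
  Q != set0 -> convex_family Q -> delta_matroid Q ->
  matroid_bases (flat_family Q).
Proof.
move=> Qn cQ dQ.
have bnd : forall A, A \in Q -> smin Q <= #|A| <= rmax Q.
  move=> A hA; apply/andP; split.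
    by rewrite /smin -big_filter; apply: bigmin_seq_le; rewrite mem_filter hA mem_index_enum.
  by rewrite /rmax (bigD1 A) //= leq_maxl.
split.
  case/set0Pn: Qn => A hA.
  have /andP [sA rA] := bnd A hA.
  have [K HK] := @exists_card (rmax Q - smin Q) (rmax Q - #|A|) ltac:(lia).
  apply/set0Pn; exists (inl @: A :|: inr @: K); rewrite inE; apply/andP; split.
    by rewrite card_sum_split pL_Uim pR_Uim HK; apply/eqP; lia.
  by rewrite pL_Uim.
move=> B1 B2; rewrite !inE => /andP [/eqP c1 q1] /andP [/eqP c2 q2] x hx.
suff [y hy hyQ] : exists2 y, y \in B2 :\: B1 & inl @^-1: (y |: (B1 :\ x)) \in Q.
  exists y => //; rewrite inE hyQ andbT.
  move/setDP: hy => [_ yB1]; move/setDP: hx => [xB1 _].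
  have h := cardsD1 x B1; rewrite xB1 /= in h.
  apply/eqP; rewrite cardsU1 !inE negb_and yB1 orbT /=.
 by rewrite -h; exact: c1.
have s1 := card_sum_split B1; have s2 := card_sum_split B2.
set A1 := inl @^-1: B1 in s1 q1 *; set A2 := inl @^-1: B2 in s2 q2 *.
set N1 := inr @^-1: B1 in s1 *; set N2 := inr @^-1: B2 in s2 *.
have e1 : #|A1| + #|N1| = rmax Q by rewrite -s1; exact: c1.
have e2 : #|A2| + #|N2| = rmax Q by rewrite -s2; exact: c2.
clear s1 s2 c1 c2.
case: x hx => [a|i] hx; last first.
  move/setDP: hx => [iB1 iB2].
  case: (boolP (N2 :\: N1 == set0)) => [/eqP H0|/set0Pn [j hj]]; last first.
    exists (inr j); first by move: hj; rewrite !inE.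
    by rewrite pL_U1r pL_D1r.
  have pr : N2 \proper N1.
    apply/properP; split; first by rewrite -setD_eq0 H0.
    by exists i; rewrite inE.
  have lt : #|A1| < #|A2| by have := proper_card pr; lia.
  have [b hb hbQ] := up cQ dQ q1 q2 lt.
  exists (inl b); first by move: hb; rewrite !inE.
  by rewrite pL_U1 pL_D1r.
move/setDP: hx => [aB1 aB2].
have aA1 : a \in A1 by rewrite inE.
have aA2 : a \notin A2 by rewrite inE.
have := down_step cQ dQ q1 q2 aA1 aA2.
case=> [hQ|[b hb hbQ]]; last first.
  exists (inl b); first by move: hb; rewrite !inE.
  by rewrite pL_U1 pL_D1.
case: (boolP (N2 :\: N1 == set0)) => [/eqP H0|/set0Pn [j hj]]; last first.
  exists (inr j); first by move: hj; rewrite !inE.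
  by rewrite pL_U1r pL_D1.
have le : #|N2| <= #|N1| by apply: subset_leq_card; rewrite -setD_eq0 H0.
have lt : #|A1 :\ a| < #|A2|.
  have := cardsD1 a A1; rewrite aA1; lia.
have [b hb hbQ] := up cQ dQ hQ q2 lt.
move/setDP: hb => [bA2 bA1a].
have ba : b != a by apply: contraNneq aA2 => <-.
exists (inl b); first by move: bA1a bA2; rewrite !inE ba /= => -> ->.
by rewrite pL_U1 pL_D1.
Qed.
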